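(* Let $N\ge1$. The closure of $\Phi_N$ in $\mathrm{PSL}_2(\hat{\mathbb{Z}}_{\mathrm{odd}})$ is $\mathrm{PSL}_2(\hat{\mathbb{Z}}_{\mathrm{odd}})$ if $3$ does not divide $N$, and is $\hat D_{\mathrm{odd}}$ if $3$ divides $N$.
   Context: $\bar\Gamma(2)=\Gamma(2)/\{\pm1\}\subset\mathrm{PSL}_2(\mathbb{Z})$, freely generated by the classes $A$ of $\begin{pmatrix}1&2\\0&1\end{pmatrix}$ and $B$ of $\begin{pmatrix}1&0\\2&1\end{pmatrix}$; $\Phi_N$ is the kernel of $\bar\Gamma(2)\to(\mathbb{Z}/N\mathbb{Z})^2$, $A\mapsto(1,0)$, $B\mapsto(0,1)$. Let $\hat{\mathbb{Z}}_{\mathrm{odd}}=\prod_{p\ne2}\mathbb{Z}_p$, with $\mathrm{PSL}_2(\mathbb{Z})\subset\mathrm{PSL}_2(\hat{\mathbb{Z}}_{\mathrm{odd}})$ and the profinite topology. $\hat D_{\mathrm{odd}}$ is the inverse image in $\mathrm{PSL}_2(\hat{\mathbb{Z}}_{\mathrm{odd}})$, under reduction mod $3$, of the Klein four-subgroup $D_3\subset\mathrm{PSL}_2(\mathbb{Z}/3\mathbb{Z})$ consisting of the classes of $\pm I$, $\pm\begin{pmatrix}0&-1\\1&0\end{pmatrix}$, $\pm\begin{pmatrix}-1&1\\1&1\end{pmatrix}$, $\pm\begin{pmatrix}1&1\\1&-1\end{pmatrix}$. *)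

(* Defs.v *)
From HB Require Import structures.
From mathcomp Require Import all_boot all_order all_algebra.
Set Implicit Arguments. Unset Strict Implicit. Unset Printing Implicit Defensive.
Import Order.TTheory GRing.Theory Num.Theory.
Local Open Scope ring_scope.

Definition mk2 (a b c d : int) : 'M[int]_2 :=
  \matrix_(i < 2, j < 2)
    if i == 0 then (if j == 0 then a else b) else (if j == 0 then c else d).

Definition congr_mx (m : nat) (X Y : 'M[int]_2) : Prop :=
  forall i j, (X i j = Y i j %[mod m%:Z])%Z.

(** A letter of a word in A, B: (is_A, is_inverse). *)
Definition letter_mx (l : bool * bool) : 'M[int]_2 :=
  match l with
  | (true, false) => mk2 1 2 0 1
  | (true, true) => mk2 1 (-2) 0 1
  | (false, false) => mk2 1 0 2 1
  | (false, true) => mk2 1 0 (-2) 1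
  end.

Definition word_mx (w : seq (bool * bool)) : 'M[int]_2 :=
  foldr (fun l acc => letter_mx l *m acc) 1%:M w.

Definition expsum (gen : bool) (w : seq (bool * bool)) : int :=
  \sum_(l <- w) (if l.1 == gen then (if l.2 then -1 else 1) else 0).

(** gamma in SL_2(Z) represents an element of Phi_N (subset of PSL_2(Z)):
    +-gamma is a word in A, B whose image in (Z/N)^2 is 0. *)
Definition inPhi (N : nat) (g : 'M[int]_2) : Prop :=
  exists w : seq (bool * bool),
    (g = word_mx w \/ g = - word_mx w) /\
    (N%:Z %| expsum true w)%Z /\ (N%:Z %| expsum false w)%Z.

(** An element of SL_2(hat Z_odd), hat Z_odd = lim_{m odd} Z/mZ = prod_{p<>2} Z_p,
    given as a compatible family of integer matrices g m (defined mod m, m odd)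
    with determinant 1 mod m.  Elements of PSL_2(hat Z_odd) are such families
    up to sign. *)
Definition SL2_odd (g : nat -> 'M[int]_2) : Prop :=
  (forall m n, odd m -> odd n -> (m %| n)%N -> congr_mx m (g n) (g m)) /\
  (forall m, odd m -> (\det (g m) = 1 %[mod m%:Z])%Z).

(** The class of g lies in the closure of Phi_N in PSL_2(hat Z_odd) for the
    profinite topology: every basic neighbourhood (+-g) K_m, K_m the kernel of
    reduction mod odd m, meets Phi_N. *)
Definition in_closure_Phi (N : nat) (g : nat -> 'M[int]_2) : Prop :=
  forall m, odd m ->
    exists gam, inPhi N gam /\ (congr_mx m gam (g m) \/ congr_mx m gam (- g m)).

(** Representatives of the Klein four-group D_3 in PSL_2(Z/3Z). *)
Definition D3_reps : seq 'M[int]_2 :=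
  [:: mk2 1 0 0 1; mk2 0 (-1) 1 0; mk2 (-1) 1 1 1; mk2 1 1 1 (-1)].

(** The class of g lies in hat D_odd: its reduction mod 3 lies in D_3. *)
Definition in_Dhat (g : nat -> 'M[int]_2) : Prop :=
  exists2 d, d \in D3_reps & (congr_mx 3 (g 3%N) d \/ congr_mx 3 (g 3%N) (- d)).

(* Main.v *)
Require Import Defs.
From mathcomp Require Import all_boot all_order all_algebra.
From mathcomp Require Import ring zify.
Set Implicit Arguments. Unset Strict Implicit. Unset Printing Implicit Defensive.
Import Order.TTheory GRing.Theory Num.Theory.
Local Open Scope ring_scope.

Lemma intr_Zp_mod (m : nat) (x : int) : (1 < m)%N ->
  (x%:~R : 'Z_m) = ((x %% m)%Z)%:~R.
Proof.
move=> m1; rewrite {1}(divz_eq x m) intrD intrM.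
have -> : ((m%:Z)%:~R : 'Z_m) = 0 by rewrite -[RHS](pchar_Zp m1).
by rewrite mulr0 add0r.
Qed.

Lemma val_intr_Zp (m : nat) (x : int) : (1 < m)%N ->
  Posz (nat_of_ord (x%:~R : 'Z_m)) = (x %% m)%Z.
Proof.
move=> m1; rewrite intr_Zp_mod //.
have m0 : (m%:Z != 0) by rewrite eqz_nat; case: (m) m1.
have mp : (0 < m%:Z) by rewrite ltz_nat; case: (m) m1.
have := modz_ge0 x m0; have := ltz_pmod x mp.
case: (x %% m)%Z => // a ha _.
by rewrite -pmulrn val_Zp_nat // modn_small // -ltz_nat.
Qed.

Lemma eqZp_mod m x y : (1 < m)%N ->
  ((x%:~R : 'Z_m) = y%:~R) <-> (x = y %[mod m])%Z.
Proof.
move=> m1; split; last by move=> h; rewrite (intr_Zp_mod x m1) h -intr_Zp_mod.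
by move=> h; rewrite -!val_intr_Zp // h.
Qed.
Definition M2 {R : Type} (a b c d : R) : 'M[R]_2 :=
  \matrix_(i < 2, j < 2)
    if i == 0 then (if j == 0 then a else b) else (if j == 0 then c else d).

Lemma mk2E a b c d : mk2 a b c d = M2 a b c d. Proof. by []. Qed.

Lemma ord2P (i : 'I_2) : i = 0 \/ i = 1.
Proof. by case: i => [[|[|i]] Hi] //; [left|right]; apply: val_inj. Qed.

Ltac cas2 := let i := fresh in let j := fresh in apply/matrixP => i j;
  case: (ord2P i) => ->; case: (ord2P j) => ->; rewrite ?mxE //=.

Section M2.
Variable R : comNzRingType.
Implicit Types a b c d : R.

Lemma M2E (X : 'M[R]_2) : X = M2 (X 0 0) (X 0 1) (X 1 0) (X 1 1).
Proof. by cas2. Qed.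

Lemma M2_entries a b c d :
  [/\ M2 a b c d 0 0 = a, M2 a b c d 0 1 = b, M2 a b c d 1 0 = c & M2 a b c d 1 1 = d].
Proof. by rewrite !mxE. Qed.

Lemma M2_inj a b c d a' b' c' d' : M2 a b c d = M2 a' b' c' d' ->
  [/\ a = a', b = b', c = c' & d = d'].
Proof. by move=> h; have := M2_entries a b c d; rewrite h; case: (M2_entries a' b' c' d') => -> -> -> -> [] -> -> -> ->. Qed.

Lemma M2_mul a b c d a' b' c' d' :
  M2 a b c d *m M2 a' b' c' d' =
  M2 (a*a'+b*c') (a*b'+b*d') (c*a'+d*c') (c*b'+d*d').
Proof.
by cas2; rewrite !big_ord_recl big_ord0 !mxE /= addr0.
Qed.

Lemma M2_1 : (1%:M : 'M[R]_2) = M2 1 0 0 1.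
Proof. by cas2. Qed.

Lemma M2_opp a b c d : - M2 a b c d = M2 (-a) (-b) (-c) (-d).
Proof. by cas2. Qed.

Lemma M2_det a b c d : \det (M2 a b c d) = a * d - b * c.
Proof.
rewrite (expand_det_row _ 0) !big_ord_recl big_ord0 /cofactor !det_mx11 !mxE /=.
rewrite /bump /= expr0 expr1; ring.
Qed.

Lemma tri_decomp (u u' b c d : R) : u * u' = 1 -> u * d - b * c = 1 ->
  M2 u b c d = M2 1 0 (c * u') 1 *m M2 u 0 0 u' *m M2 1 (u' * b) 0 1.
Proof.
move=> H1 /eqP; rewrite subr_eq => /eqP H2.
have e : d = u' * (1 + b * c) by rewrite -H2 mulrA [u' * u]mulrC H1 mul1r.
rewrite !M2_mul; congr M2; [ring: H1 | ring: H1 | ring: H1 | rewrite {1}e; ring: H1].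
Qed.

Lemma diag_decomp (u u' : R) : u * u' = 1 -> M2 u 0 0 u' =
  M2 1 u 0 1 *m (M2 1 0 (-u') 1 *m M2 1 (u-1) 0 1 *m M2 1 0 u' 1 *m M2 1 0 (1-u') 1)
  *m M2 1 (-u) 0 1 *m M2 1 (u-1) 0 1.
Proof. move=> H1; rewrite !M2_mul; congr M2; ring: H1. Qed.

End M2.

Definition E12 {R : pzRingType} (x : R) := M2 1 x 0 1.
Definition E21 {R : pzRingType} (x : R) := M2 1 0 x 1.

Lemma M2_map (R S : Type) (f : R -> S) a b c d :
  map_mx f (M2 a b c d) = M2 (f a) (f b) (f c) (f d).
Proof. by cas2. Qed.

Definition flip (l : bool * bool) := (l.1, ~~ l.2).
Definition winv (w : seq (bool * bool)) := rev (map flip w).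

Lemma word_cons l w : word_mx (l :: w) = letter_mx l *m word_mx w.
Proof. by []. Qed.

Lemma word_cat w1 w2 : word_mx (w1 ++ w2) = word_mx w1 *m word_mx w2.
Proof.
elim: w1 => [|l w1 IH] /=; first by rewrite mul1mx.
by rewrite IH mulmxA.
Qed.

Lemma expsum_cons gen l w : expsum gen (l :: w) =
  (if l.1 == gen then (if l.2 then -1 else 1) else 0) + expsum gen w.
Proof. by rewrite /expsum big_cons. Qed.

Lemma expsum_cat gen w1 w2 : expsum gen (w1 ++ w2) = expsum gen w1 + expsum gen w2.
Proof. by rewrite /expsum big_cat. Qed.

Lemma expsum_nil gen : expsum gen [::] = 0.
Proof. by rewrite /expsum big_nil. Qed.

Lemma letter_flip l : letter_mx l *m letter_mx (flip l) = 1%:M.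
Proof.
rewrite M2_1; case: l => [[] []] /=; rewrite !mk2E M2_mul; congr M2; ring.
Qed.

Lemma winv_cons l w : winv (l :: w) = winv w ++ [:: flip l].
Proof. by rewrite /winv /= rev_cons cats1. Qed.

Lemma word_winv w : word_mx w *m word_mx (winv w) = 1%:M.
Proof.
elim: w => [|l w IH]; first by rewrite /= mul1mx.
rewrite winv_cons word_cat word_cons mulmxA -(mulmxA (letter_mx l)) IH mulmx1.
by rewrite /= mulmx1 letter_flip.
Qed.

Lemma winvK w : winv (winv w) = w.
Proof. by rewrite /winv map_rev revK -map_comp map_id_in // => -[a b] _; rewrite /flip /= negbK. Qed.

Lemma expsum_winv gen w : expsum gen (winv w) = - expsum gen w.
Proof.
elim: w => [|l w IH]; first by rewrite /winv /= expsum_nil oppr0.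
rewrite winv_cons expsum_cat IH expsum_cons /expsum big_cons big_nil.
case: l => [a []] /=; by case: (a == gen); ring.
Qed.
Lemma word_nseqA k : word_mx (nseq k (true, false)) = M2 1 (2 * k%:Z) 0 1.
Proof.
elim: k => [|k IH]; first by rewrite /= M2_1.
rewrite /= -/(word_mx _) IH mk2E M2_mul; congr M2; rewrite ?mul1r ?mul0r ?addr0 ?mulr0 ?add0r //.
by rewrite -mulrDr -PoszD addn1.
Qed.

Lemma word_nseqB k : word_mx (nseq k (false, false)) = M2 1 0 (2 * k%:Z) 1.
Proof.
elim: k => [|k IH]; first by rewrite /= M2_1.
rewrite /= -/(word_mx _) IH mk2E M2_mul; congr M2; rewrite ?mul1r ?mul0r ?addr0 ?mulr0 ?add0r //.
by rewrite -mulrDr -PoszD add1n.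
Qed.

Lemma expsum_nseq gen b k : expsum gen (nseq k (b, false)) = if b == gen then k%:Z else 0.
Proof.
elim: k => [|k IH]; first by rewrite expsum_nil; case: ifP.
rewrite /= expsum_cons IH; case: ifP => _; rewrite ?addr0 //.
Qed.

Definition ktrick (m : nat) (A : int) : nat :=
  (\prod_(p <- primes m | ~~ (p %| `|A|)%N) p)%N.

Lemma unit_trick (m : nat) (A C : int) : (0 < m)%N -> ~~ (3 %| `|A|)%N ->
  (forall p, prime p -> (p %| m)%N -> (p %| `|A|)%N -> (p %| `|C|)%N -> False) ->
  coprime m `|A + 3 * (ktrick m A)%:Z * C|.
Proof.
move=> m0 nA hAC; set k := ktrick m A; set n := `|_|%N.
apply/negPn/negP => ncop.
have g1 : (1 < gcdn m n)%N.
  have := gcdn_gt0 m n; rewrite m0 /= => g0.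
  by move: ncop; rewrite /coprime; case: (gcdn m n) g0 => [|[|]].
set p := pdiv (gcdn m n).
have pp : prime p by exact: pdiv_prime.
have pm : (p %| m)%N := dvdn_trans (pdiv_dvd _) (dvdn_gcdl m n).
have pn : (p %| n)%N := dvdn_trans (pdiv_dvd _) (dvdn_gcdr m n).
have pz : (p%:Z %| A + 3 * k%:Z * C)%Z by rewrite dvdzE.
have e3 : forall x : int, (p %| `|(3 * k%:Z * x)%R|)%N = [|| p %| 3, p %| k | p %| `|x|]%N.
  by move=> x; rewrite !abszM !Euclid_dvdM // orbA.
have hk : (p %| k)%N = ~~ (p %| `|A|)%N.
  rewrite /k /ktrick Euclid_dvd_prod // big_has_cond.
  apply/hasP/idP => [[i ip /andP [ni pi]]|np].
    have ipr : prime i by move: ip; rewrite mem_primes => /and3P [].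
    by move: pi; rewrite dvdn_prime2 // => /eqP ->.
  by exists p; rewrite ?mem_primes ?pp ?m0 ?pm //= np dvdnn.
case pA : (p %| `|A|)%N.
  have : (p%:Z %| (A + 3 * k%:Z * C) - A)%Z by rewrite rpredB // dvdzE.
  rewrite (_ : A + 3 * k%:Z * C - A = 3 * k%:Z * C); last by ring.
  rewrite dvdzE /= e3 hk pA /= => /orP [p3|pC].
    by move: p3; rewrite dvdn_prime2 // => /eqP p3; move: nA; rewrite -p3 pA.
  exact: (hAC p).
have : (p%:Z %| (A + 3 * k%:Z * C) - 3 * k%:Z * C)%Z.
  by rewrite rpredB // dvdzE /= e3 hk pA orbT.
by rewrite (_ : A + 3 * k%:Z * C - 3 * k%:Z * C = A) ?dvdzE ?pA //; ring.
Qed.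

Lemma modz_ex (x y : int) (d : int) : (x = y %[mod d])%Z -> exists q, x = y + q * d.
Proof.
move=> /eqP; rewrite eqz_mod_dvd => /dvdzP [q hq]; exists q.
by rewrite -hq; ring.
Qed.

Section Zm.
Variables (m N : nat).
Hypothesis m1 : (1 < m)%N.
Local Notation Z := 'Z_m.

Definition red (X : 'M[int]_2) : 'M[Z]_2 := map_mx (fun z : int => z%:~R) X.

Lemma redM X Y : red (X *m Y) = red X *m red Y.
Proof. exact: map_mxM. Qed.
Lemma red1 : red 1%:M = 1%:M.
Proof. exact: map_mx1. Qed.
Lemma redN X : red (- X) = - red X.
Proof. exact: map_mxN. Qed.
Lemma red_det X : \det (red X) = (\det X)%:~R.
Proof. exact: det_map_mx. Qed.

Lemma red_congr X Y : congr_mx m X Y <-> red X = red Y.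
Proof.
split => [h|h i j].
  by apply/matrixP => i j; rewrite !mxE; apply/eqZp_mod.
by apply/(eqZp_mod _ _ m1); have := congr1 (fun M : 'M[Z]_2 => M i j) h; rewrite !mxE.
Qed.

Definition Wd X := exists w, red (word_mx w) = X.
Definition Rd X := exists w, (N%:Z %| expsum true w)%Z /\
  (N%:Z %| expsum false w)%Z /\ red (word_mx w) = X.

Lemma Rd_Wd X : Rd X -> Wd X.
Proof. by case=> w [_ [_ h]]; exists w. Qed.

Lemma Wd_mul X Y : Wd X -> Wd Y -> Wd (X *m Y).
Proof. by case=> w1 <- [w2 <-]; exists (w1 ++ w2); rewrite word_cat redM. Qed.

Lemma Rd_mul X Y : Rd X -> Rd Y -> Rd (X *m Y).
Proof.
case=> w1 [h1 [h2 <-]] [w2 [h3 [h4 <-]]]; exists (w1 ++ w2).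
by rewrite word_cat redM !expsum_cat !rpredD.
Qed.

Lemma Rd_1 : Rd 1%:M.
Proof. by exists [::]; rewrite !expsum_nil /= red1 !dvdz0. Qed.

Lemma inv_word w V : red (word_mx w) *m V = 1%:M -> red (word_mx (winv w)) = V.
Proof.
move=> h.
have h1 : red (word_mx (winv w)) *m red (word_mx w) = 1%:M.
  by rewrite -redM -{2}(winvK w) word_winv red1.
by rewrite -[RHS]mul1mx -h1 -mulmxA h mulmx1.
Qed.

Lemma Rd_conj U V X : Wd U -> U *m V = 1%:M -> Rd X -> Rd (U *m X *m V).
Proof.
case=> u <- hV [w [h1 [h2 <-]]].
exists (u ++ w ++ winv u); rewrite !word_cat !redM (inv_word hV) mulmxA.
have e : forall g, expsum g u + (expsum g w + - expsum g u) = expsum g w by move=> g; ring.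
by rewrite !expsum_cat !expsum_winv !e.
Qed.

Lemma Rd_comm U V U' V' : Wd U -> Wd V -> U *m U' = 1%:M -> V *m V' = 1%:M ->
  Rd (U *m V *m U' *m V').
Proof.
case=> u <- [v <-] hU hV.
exists (u ++ v ++ winv u ++ winv v); rewrite !word_cat !redM (inv_word hU) (inv_word hV) !mulmxA.
have e : forall g, expsum g u + (expsum g v + (- expsum g u + - expsum g v)) = 0 by move=> g; ring.
by rewrite !expsum_cat !expsum_winv !e !dvdz0.
Qed.


Lemma E12_add (x y : Z) : E12 x *m E12 y = E12 (x + y).
Proof. rewrite /E12 M2_mul; congr M2; ring. Qed.
Lemma E21_add (x y : Z) : E21 x *m E21 y = E21 (x + y).
Proof. rewrite /E21 M2_mul; congr M2; ring. Qed.
Lemma E12_inv (x : Z) : E12 x *m E12 (- x) = 1%:M.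
Proof. by rewrite E12_add subrr M2_1. Qed.
Lemma E21_inv (x : Z) : E21 x *m E21 (- x) = 1%:M.
Proof. by rewrite E21_add subrr M2_1. Qed.

Section Gen.
Variable P : 'M[Z]_2 -> Prop.
Hypothesis PM : forall X Y, P X -> P Y -> P (X *m Y).
Hypothesis P12 : forall x : Z, P (E12 x).
Hypothesis P21 : forall x : Z, P (E21 x).

Ltac pm := repeat (apply: PM; last by first [apply: P12 | apply: P21]);
  first [apply: P12 | apply: P21].

Lemma P_tri u v y : u * v = 1 -> P (M2 u y 0 v).
Proof.
move=> uv.
have -> : M2 u y 0 v = E12 u *m E21 (- v) *m E12 u *m E12 (-1) *m E21 1 *m E12 (-1)
   *m E12 (v * y).
  rewrite /E12 /E21 !M2_mul; congr M2; ring: uv.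
by pm.
Qed.

Lemma P_S : P (M2 0 1 (-1) 0).
Proof.
have -> : M2 0 1 (-1) 0 = E12 1 *m E21 (-1) *m E12 1 :> 'M[Z]_2.
  rewrite /E12 /E21 !M2_mul; congr M2; ring.
by pm.
Qed.

Lemma P_euclid n : forall (a c : nat) (b d : Z), (a + c <= n)%N ->
  a%:R * d - b * c%:R = 1 -> P (M2 a%:R b c%:R d).
Proof.
elim: n => [|n IH] a c b d hn hdet.
  have [ea ec] : a = 0%N /\ c = 0%N by case: (a) (c) hn => [|?] [|?].
  subst a c.
  by move: hdet; rewrite !mul0r mulr0 subrr => /esym/eqP; rewrite oner_eq0.
case: (posnP c) => [c0|cpos].
  by subst c; apply: P_tri; move: hdet; rewrite mulr0 subr0.
case: (posnP a) => [a0|apos].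
  subst a.
  have -> : M2 0%:R b c%:R d = M2 0 1 (-1) 0 *m M2 (- c%:R) (-d) 0 b.
    rewrite M2_mul; congr M2; ring.
  apply: PM; first exact: P_S.
  by apply: P_tri; rewrite -[RHS]hdet; ring.
case: (leqP c a) => hca.
  have -> : M2 a%:R b c%:R d = E12 1 *m M2 (a - c)%N%:R (b - d) c%:R d.
    rewrite /E12 M2_mul natrB //; congr M2; ring.
  apply: PM => //; apply: IH; first by move: hn cpos hca; lia.
  by rewrite natrB // -[RHS]hdet; ring.
have -> : M2 a%:R b c%:R d = E21 1 *m M2 a%:R b (c - a)%N%:R (d - b).
  rewrite /E21 M2_mul natrB 1?ltnW //; congr M2; ring.
apply: PM => //; apply: IH; first by move: hn apos hca; lia.
by rewrite natrB 1?ltnW // -[RHS]hdet; ring.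
Qed.

Lemma P_SL2 X : \det X = 1 -> P X.
Proof.
rewrite (M2E X) M2_det => h.
move: h; set a := X 0 0; set b := X 0 1; set c := X 1 0; set d := X 1 1 => h.
have := @P_euclid (a + c)%N a c b d (leqnn _).
by rewrite !natr_Zp; apply.
Qed.
End Gen.


Section Odd.
Hypothesis modd : odd m.
Definition hlf : Z := (m./2).+1%:R.

Lemma two_hlf : 2 * hlf = 1.
Proof.
have e : (2 * (m./2).+1 = m + 1)%N.
  by rewrite -[in RHS](odd_double_half m) modd -muln2; lia.
by rewrite /hlf -natrM e natrD (pchar_Zp m1) add0r.
Qed.

Lemma intr2k (k : nat) : ((2 * k%:Z)%:~R : Z) = 2 * k%:R.
Proof. by rewrite intrM. Qed.

Lemma Wd_E12 (x : Z) : Wd (E12 x).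
Proof.
exists (nseq (x * (m./2).+1) (true, false)).
rewrite /red word_nseqA M2_map /E12 intr2k natrM natr_Zp -/hlf mulrCA two_hlf mulr1.
by congr M2.
Qed.

Lemma Wd_E21 (x : Z) : Wd (E21 x).
Proof.
exists (nseq (x * (m./2).+1) (false, false)).
rewrite /red word_nseqB M2_map /E21 intr2k natrM natr_Zp -/hlf mulrCA two_hlf mulr1.
by congr M2.
Qed.

Lemma Rd_E12N (y : Z) : Rd (E12 (N%:R * y)).
Proof.
exists (nseq (N * y * (m./2).+1) (true, false)).
rewrite !expsum_nseq /= dvdz0; split; first by rewrite dvdzE /= -mulnA dvdn_mulr.
split=> //.
rewrite /red word_nseqA M2_map /E12 intr2k !natrM natr_Zp -/hlf mulrCA two_hlf mulr1.
by congr M2.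
Qed.

Lemma Rd_E21N (y : Z) : Rd (E21 (N%:R * y)).
Proof.
exists (nseq (N * y * (m./2).+1) (false, false)).
rewrite !expsum_nseq /= dvdz0; split=> //; split; first by rewrite dvdzE /= -mulnA dvdn_mulr.
rewrite /red word_nseqB M2_map /E21 intr2k !natrM natr_Zp -/hlf mulrCA two_hlf mulr1.
by congr M2.
Qed.

Lemma Wd_SL2 X : \det X = 1 -> Wd X.
Proof. by apply: P_SL2; [exact: Wd_mul | exact: Wd_E12 | exact: Wd_E21]. Qed.

Lemma diag_inv (t hh : Z) : t * hh = 1 -> M2 t 0 0 hh *m M2 hh 0 0 t = 1%:M.
Proof. by move=> H; rewrite M2_1 M2_mul; congr M2; ring: H. Qed.

Lemma Wd_diag : Wd (M2 2 0 0 hlf).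
Proof. by apply: Wd_SL2; rewrite M2_det mulr0 subr0 two_hlf. Qed.
Lemma Wd_diag' : Wd (M2 hlf 0 0 2).
Proof. by apply: Wd_SL2; rewrite M2_det mulr0 subr0 mulrC two_hlf. Qed.

Lemma Rd_E12_3 (x : Z) : Rd (E12 (3 * x)).
Proof.
have key : forall (t hh y : Z), t * hh = 1 ->
  E12 ((t * t - 1) * y) = E12 (- y) *m M2 t 0 0 hh *m E12 y *m M2 hh 0 0 t.
  by move=> t hh y H; rewrite /E12 !M2_mul; congr M2; ring: H.
rewrite (_ : 3 * x = (2 * 2 - 1) * x); last by ring.
rewrite (key _ _ _ two_hlf).
apply: Rd_comm; [exact: Wd_E12 | exact: Wd_diag | by rewrite E12_add addNr M2_1 | ].
exact: diag_inv two_hlf.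
Qed.

Lemma Rd_E21_3 (x : Z) : Rd (E21 (3 * x)).
Proof.
have key : forall (t hh y : Z), t * hh = 1 ->
  E21 ((t * t - 1) * y) = E21 (- y) *m M2 hh 0 0 t *m E21 y *m M2 t 0 0 hh.
  by move=> t hh y H; rewrite /E21 !M2_mul; congr M2; ring: H.
rewrite (_ : 3 * x = (2 * 2 - 1) * x); last by ring.
rewrite (key _ _ _ two_hlf).
apply: Rd_comm; [exact: Wd_E21 | exact: Wd_diag' | by rewrite E21_add addNr M2_1 | ].
by apply: diag_inv; rewrite mulrC two_hlf.
Qed.

Lemma unit_intr (x : int) : coprime m `|x| -> (x%:~R : Z) \is a GRing.unit.
Proof.
case: x => n /= h.
  by rewrite -pmulrn unitZpE.
by rewrite NegzE mulrNz unitrN -pmulrn unitZpE.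
Qed.

Lemma Rd_not3 : ~~ (3 %| N)%N -> forall X, \det X = 1 -> Rd X.
Proof.
move=> n3.
have c3 : coprime 3 N by rewrite prime_coprime.
have [a _ ha] := Bezoutl N (isT : (0 < 3)%N).
move: ha; rewrite (eqP c3) => /dvdnP [q hq].
have e : (q%:R * 3 - a%:R * N%:R : Z) = 1.
  by rewrite -natrM -hq natrD natrM addrK.
have E12all : forall x : Z, Rd (E12 x).
  move=> x; have -> : x = 3 * (q%:R * x) + N%:R * (- (a%:R * x)).
    transitivity (x * (q%:R * 3 - a%:R * N%:R)); first by rewrite e mulr1.
    ring.
  by rewrite -E12_add; apply: Rd_mul; [exact: Rd_E12_3 | exact: Rd_E12N].
have E21all : forall x : Z, Rd (E21 x).
  move=> x; have -> : x = 3 * (q%:R * x) + N%:R * (- (a%:R * x)).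
    transitivity (x * (q%:R * 3 - a%:R * N%:R)); first by rewrite e mulr1.
    ring.
  by rewrite -E21_add; apply: Rd_mul; [exact: Rd_E21_3 | exact: Rd_E21N].
by apply: P_SL2; [exact: Rd_mul | |].
Qed.

Lemma Rd_3unit : ~~ (3 %| m)%N -> forall X, \det X = 1 -> Rd X.
Proof.
move=> n3.
have u3 : (3 : Z) \is a GRing.unit by rewrite unitZpE // coprime_sym prime_coprime.
apply: P_SL2; first exact: Rd_mul.
  move=> x; rewrite (_ : x = 3 * (3^-1 * x)); first exact: Rd_E12_3.
  by rewrite mulrA mulrV // mul1r.
move=> x; rewrite (_ : x = 3 * (3^-1 * x)); first exact: Rd_E21_3.
  by rewrite mulrA mulrV // mul1r.
Qed.

Lemma intrn (n : nat) : ((n%:Z)%:~R : Z) = n%:R.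
Proof. exact: pmulrn. Qed.

Lemma Rd_gamma3 (A B C D : int) : (3 %| m)%N ->
  (A = 1 %[mod 3])%Z -> (B = 0 %[mod 3])%Z -> (C = 0 %[mod 3])%Z ->
  (D = 1 %[mod 3])%Z -> (A * D - B * C = 1 %[mod m])%Z -> Rd (red (M2 A B C D)).
Proof.
move=> m3 hA hB hC hD hdet.
have m0 : (0 < m)%N by apply: ltnW.
have nA : ~~ (3 %| `|A|)%N.
  apply/negP => h3; have : (3 %| A)%Z by rewrite dvdzE.
  by move/dvdz_mod0P; rewrite hA.
have hAC : forall p, prime p -> (p %| m)%N -> (p %| `|A|)%N -> (p %| `|C|)%N -> False.
  move=> p pp pm pA pC.
  have h1 : (p%:Z %| A * D - B * C - 1)%Z.
    apply: (@dvdz_trans m%:Z); first by rewrite dvdzE.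
    by rewrite -eqz_mod_dvd; apply/eqP.
  have h2 : (p%:Z %| A * D - B * C)%Z.
    by apply: rpredB; [apply: dvdz_mulr | apply: dvdz_mull]; rewrite dvdzE.
  have := rpredB h2 h1.
  rewrite (_ : A * D - B * C - (A * D - B * C - 1) = 1); last by ring.
  by rewrite dvdz1 /= => /eqP p1; move: pp; rewrite p1.
have cop := unit_trick m0 nA hAC.
move: cop; set k := ktrick m A => cop.
have uU := unit_intr cop.
have [a0 ea] := modz_ex hA; have [b0 eb] := modz_ex hB.
have [c0 ec] := modz_ex hC; have [d0 ed] := modz_ex hD.
have det1 : (A%:~R * D%:~R - B%:~R * C%:~R : Z) = 1.
  have := (iffRL (eqZp_mod (A * D - B * C) 1 m1) hdet).
  by rewrite intrB !intrM mulr1z.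
rewrite /red M2_map.
move: det1 uU; set a := (A%:~R : Z); set b := (B%:~R : Z); set c := (C%:~R : Z);
  set d := (D%:~R : Z) => det1.
have hu : ((A + 3 * k%:Z * C)%:~R : Z) = a + 3 * (k%:R * c).
  by rewrite intrD !intrM !intrn mulrA.
rewrite hu; set u := a + 3 * (k%:R * c) => uU.
set u' := u^-1.
have huu : u * u' = 1 by rewrite mulrV.
have -> : M2 a b c d = E12 (3 * (- k%:R)) *m M2 u (b + 3 * (k%:R * d)) c d.
  by rewrite /E12 M2_mul /u; congr M2; ring.
apply: Rd_mul; first exact: Rd_E12_3.
have detX1 : u * d - (b + 3 * (k%:R * d)) * c = 1.
  by rewrite -[RHS]det1 /u; ring.
rewrite (tri_decomp huu detX1).
have ca : a = 1 + 3 * a0%:~R by rewrite /a ea intrD intrM mulrC.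
have cb : b = 3 * b0%:~R by rewrite /b eb add0r intrM mulrC.
have cc : c = 3 * c0%:~R by rewrite /c ec add0r intrM mulrC.
apply: Rd_mul; last first.
  have -> : u' * (b + 3 * (k%:R * d)) = 3 * (u' * (b0%:~R + k%:R * d)).
    by rewrite cb; ring.
  exact: Rd_E12_3.
apply: Rd_mul.
  have -> : c * u' = 3 * (c0%:~R * u') by rewrite cc; ring.
  exact: Rd_E21_3.
set y := a0%:~R + k%:R * c.
have uy : u - 1 = 3 * y by rewrite /u ca /y; ring.
have uy' : 1 - u' = 3 * (y * u').
  by rewrite mulrA -uy mulrBl mul1r huu.
rewrite (diag_decomp huu) uy uy'.
apply: Rd_mul; last exact: Rd_E12_3.
apply: Rd_conj; [exact: Wd_E12 | exact: E12_inv | ].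
apply: Rd_mul; last exact: Rd_E21_3.
apply: Rd_conj; [exact: Wd_E21 | by rewrite E21_add addNr M2_1 | exact: Rd_E12_3].
Qed.
End Odd.
End Zm.

Definition T3 := (nat * nat * nat * nat)%type.
Definition mT (t : T3) : 'M['Z_3]_2 :=
  M2 t.1.1.1%:R t.1.1.2%:R t.1.2%:R t.2%:R.
Definition mulT (s t : T3) : T3 :=
  ((s.1.1.1 * t.1.1.1 + s.1.1.2 * t.1.2) %% 3, (s.1.1.1 * t.1.1.2 + s.1.1.2 * t.2) %% 3,
   (s.1.2 * t.1.1.1 + s.2 * t.1.2) %% 3, (s.1.2 * t.1.1.2 + s.2 * t.2) %% 3)%N.
Lemma mT_mul s t : mT s *m mT t = mT (mulT s t).
Proof. by rewrite /mT M2_mul /mulT /= !Zp_nat_mod // !natrD !natrM. Qed.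

Definition lt3 (l : bool * bool) : T3 :=
  match l with
  | (true, false) => (1, 2, 0, 1) | (true, true) => (1, 1, 0, 1)
  | (false, false) => (1, 0, 2, 1) | (false, true) => (1, 0, 1, 1) end%N.
Definition chiN (l : bool * bool) : nat :=
  match l with
  | (true, false) => 1 | (true, true) => 2
  | (false, false) => 2 | (false, true) => 1 end%N.

Lemma intr3 (x : int) (n : nat) : (x = n%:Z %[mod 3])%Z -> (x%:~R : 'Z_3) = n%:R.
Proof. by move=> h; rewrite -intrn; apply/eqZp_mod. Qed.

Lemma red_letter l : red 3 (letter_mx l) = mT (lt3 l).
Proof.
by case: l => [[] []]; rewrite /red /= mk2E M2_map /mT /=; congr M2; apply: intr3.
Qed.

Definition C0 : seq T3 := [:: (0, 1, 2, 0); (0, 2, 1, 0); (1, 0, 0, 1); (1, 1, 1, 2); (1, 2, 2, 2); (2, 0, 0, 2); (2, 1, 1, 1); (2, 2, 2, 1)]%N.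
Definition C1 : seq T3 := [:: (0, 1, 2, 1); (0, 2, 1, 2); (1, 0, 1, 1); (1, 1, 2, 0); (1, 2, 0, 1); (2, 0, 2, 2); (2, 1, 0, 2); (2, 2, 1, 0)]%N.
Definition C2 : seq T3 := [:: (0, 1, 2, 2); (0, 2, 1, 1); (1, 0, 2, 1); (1, 1, 0, 1); (1, 2, 1, 0); (2, 0, 1, 2); (2, 1, 2, 0); (2, 2, 0, 2)]%N.
Definition cos (k : nat) := match k with 0 => C0 | 1 => C1 | _ => C2 end%N.

Lemma check_all : all (fun l => all (fun k => all (fun t => mulT (lt3 l) t \in cos ((k + chiN l) %% 3)) (cos k)) (iota 0 3))
  [:: (true,false);(true,true);(false,false);(false,true)].
Proof. reflexivity. Qed.

Lemma chi_ok l : (((if l.1 == true then (if l.2 then -1 else 1) else 0) -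
   (if l.1 == false then (if l.2 then -1 else 1) else 0))%:~R : 'Z_3) = (chiN l)%:R.
Proof. by case: l => [[] []]; apply: intr3. Qed.

Lemma invariant w : exists k, [/\ (k < 3)%N,
  ((expsum true w - expsum false w)%:~R : 'Z_3) = k%:R &
  exists2 t, t \in cos k & red 3 (word_mx w) = mT t].
Proof.
elim: w => [|l w [k [hk he [t ht hr]]]].
  exists 0%N; split => //; first by rewrite !expsum_nil subrr mulr0z.
  by exists (1, 0, 0, 1)%N => //; rewrite /= red1 M2_1.
exists ((k + chiN l) %% 3)%N; split; first by rewrite ltn_pmod.
  rewrite !expsum_cons.
  rewrite (_ : forall x y z u : int, (x + y) - (z + u) = (x - z) + (y - u)); last by move=> *; ring.
  by rewrite intrD chi_ok he Zp_nat_mod // natrD addrC.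
exists (mulT (lt3 l) t); last by rewrite word_cons redM red_letter hr mT_mul.
have lin : l \in [:: (true,false);(true,true);(false,false);(false,true)].
  by case: l => [[] []].
have := check_all; move/allP => /(_ l lin) /allP /(_ k).
rewrite mem_iota add0n hk => /(_ isT) /allP /(_ t ht).
by [].
Qed.

Lemma word_mod3 w : (3 %| expsum true w)%Z -> (3 %| expsum false w)%Z ->
  exists2 t, t \in C0 & red 3 (word_mx w) = mT t.
Proof.
move=> h1 h2; have [k [hk he [t ht hr]]] := invariant w.
have : ((expsum true w - expsum false w)%:~R : 'Z_3) = 0%N%:R.
  apply: intr3; apply/eqP; rewrite eqz_mod_dvd subr0; exact: rpredB.
rewrite he => /(congr1 (@nat_of_ord _)); rewrite !val_Zp_nat // !modn_small // => k0.
by exists t => //; move: ht; rewrite k0.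
Qed.

Lemma mT_red (a b c d : nat) (A B C D : int) :
  (A = a %[mod 3])%Z -> (B = b %[mod 3])%Z -> (C = c %[mod 3])%Z -> (D = d %[mod 3])%Z ->
  mT (a, b, c, d) = red 3 (mk2 A B C D).
Proof. by move=> *; rewrite /red mk2E M2_map /mT /=; congr M2; symmetry; apply: intr3. Qed.

Lemma mT_redN (a b c d : nat) (A B C D : int) :
  (- A = a %[mod 3])%Z -> (- B = b %[mod 3])%Z -> (- C = c %[mod 3])%Z -> (- D = d %[mod 3])%Z ->
  mT (a, b, c, d) = - red 3 (mk2 A B C D).
Proof. by move=> *; rewrite -redN mk2E M2_opp -mk2E; apply: mT_red. Qed.

Lemma C0_D3 t : t \in C0 -> exists2 d, d \in D3_reps & (mT t = red 3 d \/ mT t = - red 3 d).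
Proof.
rewrite !inE => /orP [/eqP -> | /orP [/eqP -> | /orP [/eqP -> | /orP [/eqP -> |
  /orP [/eqP -> | /orP [/eqP -> | /orP [/eqP -> | /eqP ->]]]]]]].
- by exists (mk2 0 (-1) 1 0); rewrite ?inE ?eqxx ?orbT //; right; apply: mT_redN.
- by exists (mk2 0 (-1) 1 0); rewrite ?inE ?eqxx ?orbT //; left; apply: mT_red.
- by exists (mk2 1 0 0 1); rewrite ?inE ?eqxx ?orbT //; left; apply: mT_red.
- by exists (mk2 1 1 1 (-1)); rewrite ?inE ?eqxx ?orbT //; left; apply: mT_red.
- by exists (mk2 (-1) 1 1 1); rewrite ?inE ?eqxx ?orbT //; right; apply: mT_redN.
- by exists (mk2 1 0 0 1); rewrite ?inE ?eqxx ?orbT //; right; apply: mT_redN.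
- by exists (mk2 (-1) 1 1 1); rewrite ?inE ?eqxx ?orbT //; left; apply: mT_red.
- by exists (mk2 1 1 1 (-1)); rewrite ?inE ?eqxx ?orbT //; right; apply: mT_redN.
Qed.

Lemma red1_mT : red 3 (word_mx [::]) = mT (1, 0, 0, 1)%N.
Proof. by rewrite /= red1 M2_1. Qed.

Lemma Q8lift d : d \in D3_reps -> exists w, [/\ expsum true w = 0, expsum false w = 0 &
  (red 3 (word_mx w) = red 3 d \/ red 3 (word_mx w) = - red 3 d)].
Proof.
rewrite !inE => /orP [/eqP -> | /orP [/eqP -> | /orP [/eqP -> | /eqP ->]]].
- by exists [::]; rewrite !expsum_nil; split => //; left; rewrite /= mk2E -M2_1.
- exists [:: (true,false);(false,false);(true,true);(false,true)].
  split; [by rewrite /expsum !big_cons big_nil | by rewrite /expsum !big_cons big_nil|].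
  rewrite !word_cons !redM !red_letter red1_mT !mT_mul.
  first [ left; rewrite -(@mT_red 0 2 1 0) //; congr mT; reflexivity
        | right; rewrite -(@mT_redN 0 1 2 0) //; congr mT; reflexivity ].
- exists [:: (true,false);(false,true);(true,true);(false,false)].
  split; [by rewrite /expsum !big_cons big_nil | by rewrite /expsum !big_cons big_nil|].
  rewrite !word_cons !redM !red_letter red1_mT !mT_mul.
  first [ left; rewrite -(@mT_red 2 1 1 1) //; congr mT; reflexivity
        | right; rewrite -(@mT_redN 1 2 2 2) //; congr mT; reflexivity ].
- exists [:: (true,true);(false,false);(true,false);(false,true)].
  split; [by rewrite /expsum !big_cons big_nil | by rewrite /expsum !big_cons big_nil|].
  rewrite !word_cons !redM !red_letter red1_mT !mT_mul.
  first [ left; rewrite -(@mT_red 1 1 1 2) //; congr mT; reflexivity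
        | right; rewrite -(@mT_redN 2 2 2 1) //; congr mT; reflexivity ].
Qed.

Definition pm {R : pzRingType} (X Y : 'M[R]_2) := X = Y \/ X = - Y.
Lemma pm_trans (R : pzRingType) (X Y Z : 'M[R]_2) : pm X Y -> pm Y Z -> pm X Z.
Proof. by move=> [->|->] [->|->]; rewrite ?opprK; [left|right|right|left]. Qed.
Lemma pm_sym (R : pzRingType) (X Y : 'M[R]_2) : pm X Y -> pm Y X.
Proof. by move=> [->|->]; [left|right; rewrite opprK]. Qed.
Lemma pm_mull (R : pzRingType) (A X Y : 'M[R]_2) : pm X Y -> pm (A *m X) (A *m Y).
Proof. by move=> [->|->]; [left|right; rewrite mulmxN]. Qed.

Lemma pm_congr m (X Y : 'M[int]_2) : (1 < m)%N ->
  (congr_mx m X Y \/ congr_mx m X (- Y)) <-> pm (red m X) (red m Y).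
Proof.
move=> m1; rewrite /pm -redN; split.
  by move=> [h|h]; [left|right]; apply/red_congr.
by move=> [h|h]; [left|right]; apply/(red_congr m1).
Qed.

Lemma det_letter l : \det (letter_mx l) = 1.
Proof. by case: l => [[] []]; rewrite /= mk2E M2_det. Qed.

Lemma det_word w : \det (word_mx w) = 1.
Proof.
elim: w => [|l w IH]; first by rewrite /= det1.
by rewrite word_cons det_mulmx det_letter IH mulr1.
Qed.

Lemma closure_gen N g :
  (forall m, odd m -> (1 < m)%N -> Rd N (red m (g m)) \/ Rd N (- red m (g m))) ->
  in_closure_Phi N g.
Proof.
move=> H m modd.
case: (ltnP 1 m) => m1; last first.
  have -> : m = 1%N by case: m modd m1 => [|[|]].
  exists (word_mx [::]); split; first by exists [::]; rewrite !expsum_nil !dvdz0; split => //; left.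
  by left => i j; rewrite !modz1.
have [[w [h1 [h2 hw]]]|[w [h1 [h2 hw]]]] := H m modd m1.
  exists (word_mx w); split; first by exists w; split => //; left.
  by left; apply/red_congr.
exists (word_mx w); split; first by exists w; split => //; left.
by right; apply/(red_congr m1); rewrite redN.
Qed.

Lemma det_red m g : (1 < m)%N -> (\det g = 1 %[mod m])%Z -> \det (red m g) = 1.
Proof. by move=> m1 h; rewrite red_det; have := iffRL (eqZp_mod (\det g) 1 m1) h; rewrite mulr1z. Qed.

Lemma Rd_of_Y m N (Y : 'M[int]_2) : (1 < m)%N -> odd m -> (3 %| m)%N ->
  congr_mx 3 Y 1%:M -> (\det Y = 1 %[mod m])%Z -> Rd N (red m Y).
Proof.
move=> m1 modd m3 hY detY.
rewrite (M2E Y); apply: Rd_gamma3 => //;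
  try by move: detY; rewrite {1}(M2E Y) M2_det.
- by move: (hY 0 0); rewrite !mxE.
- by move: (hY 0 1); rewrite !mxE.
- by move: (hY 1 0); rewrite !mxE.
- by move: (hY 1 1); rewrite !mxE.
Qed.

Theorem proposition14 (N : nat) (hN : (1 <= N)%N) :
  (~~ (3 %| N)%N -> forall g, SL2_odd g -> in_closure_Phi N g) /\
  ((3 %| N)%N -> forall g, SL2_odd g -> (in_closure_Phi N g <-> in_Dhat g)).
Proof.
split.
  move=> n3 g [_ hdet]; apply: closure_gen => m modd m1; left.
  by apply: Rd_not3 => //; apply: det_red => //; exact: hdet.
move=> N3 g [hcomp hdet]; split.
- move=> /(_ 3%N isT) [gam [[w [hgam [h1 h2]]] hc]].
  have d3 : (3%:Z %| N%:Z)%Z by rewrite dvdzE.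
  have [t tC0 ht] := word_mod3 (dvdz_trans d3 h1) (dvdz_trans d3 h2).
  have [d dD hd] := C0_D3 tC0.
  exists d => //; apply/pm_congr => //.
  apply: (pm_trans (Y := red 3 gam)).
    by apply: pm_sym; apply/pm_congr.
  apply: (pm_trans (Y := red 3 (word_mx w))).
    by case: hgam => ->; [left|right]; rewrite ?redN.
  by rewrite ht.
- move=> [d dD hd]; apply: closure_gen => m modd m1.
  have det1 := det_red m1 (hdet m modd).
  case: (boolP (3 %| m)%N) => m3; last by left; apply: Rd_3unit.
  have [w [e1 e2 hw]] := Q8lift dD.
  have p1 : pm (red 3 (g m)) (red 3 (word_mx w)).
    apply: (pm_trans (Y := red 3 (g 3%N))).
      by left; apply/(@red_congr 3 isT); apply: (hcomp 3%N m).
    apply: (pm_trans (Y := red 3 d)); first by apply/pm_congr.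
    exact: pm_sym.
  set Y := word_mx (winv w) *m g m.
  have wwi : word_mx (winv w) *m word_mx w = 1%:M.
    by rewrite -{2}(winvK w) word_winv.
  have pY : pm (red 3 Y) (red 3 1%:M).
    rewrite /Y redM -wwi redM; exact: pm_mull.
  have gmY : red m (g m) = red m (word_mx w) *m red m Y.
    by rewrite /Y redM mulmxA -redM word_winv red1 mul1mx.
  have Rw : Rd N (red m (word_mx w)) by exists w; rewrite e1 e2 dvdz0.
  have detY : (\det Y = 1 %[mod m])%Z.
    by rewrite /Y det_mulmx det_word mul1r; exact: hdet.
  move/(@pm_congr 3 _ _ isT): pY => [hY|hY].
    left; rewrite gmY; apply: Rd_mul => //.
    exact: Rd_of_Y.
  right; rewrite gmY -mulmxN -redN; apply: Rd_mul => //.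
  apply: Rd_of_Y => //.
    by apply/(@red_congr 3 isT); rewrite redN (iffLR (@red_congr 3 isT _ _) hY) redN opprK.
  by rewrite -scaleN1r detZ (_ : (-1) ^+ 2 = 1 :> int) ?mul1r.
Qed.
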